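(* Let $\{\mu_t\}$ be a free convolution semigroup and let $\{V_n(x,t)\}_{n\ge1}$ be a family of fluctuation polynomials for $\{\mu_t\}$, i.e. for each $n\ge1$, $\partial_xV_n(x,t)$ is a martingale polynomial for $\{\mu_t\}$ of degree $n-1$. Then for each $t\in\mathbb R_+$, $\{1\}\cup\{V_n(\cdot,t)\}_{n\ge1}$ is a basis of $\mathbb C[x]$. Let $\{V_n^\ast(t)\}_{n\ge1}\subset\mathcal M_0$ be the dual family, determined by $\langle V_n^\ast(t),1\rangle=0$ and $\langle V_n^\ast(t),V_k(\cdot,t)\rangle=\delta_{nk}$. Then for all $n\ge1$ and $s,t\ge0$, $D_{\mu_s}C_t(V_n^\ast(s))=V_n^\ast(t+s)$.
   Context: $\mathcal M$ is the space of linear functionals on $\mathbb C[x]$ with the weak-$*$ topology (convergence of every moment), $\mathcal M_1=\{\nu:\langle\nu,1\rangle=1\}$, $\mathcal M_0=\{\nu:\langle\nu,1\rangle=0\}$. For unital $\nu$: $G_\nu(z)=\sum\langle\nu,x^n\rangle z^{-(n+1)}$, $K_\nu$ its compositional inverse, $R_\nu=K_\nu-\frac1z$; $\boxplus$ on $\mathcal M_1$ is defined by $R_{\mu\boxplus\nu}=R_\mu+R_\nu$. $\mu$ is a freely infinitely divisible probability measure with all moments finite and $\{\mu_t\}$ the free convolution semigroup with $\mu_1=\mu$, $R_{\mu_t}=tR_\mu$. $C_t(\tau)=\mu_t\boxplus\tau$ and $D_\tau C_t(\nu)=\lim_{\varepsilon\to0}\frac1\varepsilon(C_t(\tau+\varepsilon\nu)-C_t(\tau))$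 (weak-$*$ limit) for $\tau\in\mathcal M_1$, $\nu\in\mathcal M_0$. Martingale polynomial: $p(x,t)$ polynomial in $x$ with $\mathcal K_{s,t}(p(\cdot,t))=p(\cdot,s)$ for $s<t$, where $\mathcal K_{s,t}$ is the linear operator on $\mathbb C[x]$ determined coefficientwise (as formal series in $z^{-1}$) by $\mathcal K_{s,t}(\mathrm{Res}_z)=\mathrm{Res}_{F_{s,t}(z)}$, $\mathrm{Res}_z(x)=\frac1{z-x}$, $F_{s,t}=K_{\mu_s}\circ G_{\mu_t}$. *)

(* Defs.v *)
From HB Require Import structures.
From mathcomp Require Import all_boot all_order all_algebra.
From mathcomp Require Import complex.
From mathcomp Require Import all_classical all_reals all_analysis.
Set Implicit Arguments. Unset Strict Implicit. Unset Printing Implicit Defensive.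
Import Order.TTheory GRing.Theory Num.Theory.
Local Open Scope ring_scope.
Local Open Scope complex_scope.

Section FormalSeries.
Variable K : comPzRingType.

Definition ps := nat -> K.
Definition ps_one : ps := fun n => (n == 0%N)%:R.
Definition ps_X : ps := fun n => (n == 1%N)%:R.
Definition ps_mul (a b : ps) : ps := fun n => \sum_(i < n.+1) a i * b (n - i)%N.
Definition ps_exp (a : ps) (k : nat) : ps := iter k (ps_mul a) ps_one.

(* strong recursion: value at n computed from the values at indices < n *)
Fixpoint srec_seq (f : nat -> (nat -> K) -> K) (n : nat) : seq K :=
  match n with
  | 0 => [:: f 0%N (fun _ => 0)]
  | n'.+1 => let s := srec_seq f n' in rcons s (f n (nth 0 s))
  end.
Definition srec (f : nat -> (nat -> K) -> K) : ps := fun n => nth 0 (srec_seq f n) n.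

(* multiplicative inverse of a series whose constant coefficient is 1
   (the coefficient a 0 is not read and is taken to be 1) *)
Definition ps_inv1 (a : ps) : ps :=
  srec (fun n b => if n is 0 then 1 else - \sum_(1 <= i < n.+1) a i * b (n - i)%N).
End FormalSeries.

Section FreeProb.
Variable R : realType.
Local Notation C := R[i].

(* M : linear functionals on C[x], represented by their moment sequences
   n |-> <nu, x^n> ; M_1 : nu 0 = 1 ; M_0 : nu 0 = 0 *)
Definition Mom := nat -> C.
Definition pairing (nu : Mom) (p : {poly C}) : C := \sum_(i < size p) p`_i * nu i.

(* With w = 1/z: G_nu(1/w) = w * M_nu(w), M_nu(w) = sum_n <nu,x^n> w^n.
   K_nu (G_nu z) = z with K_nu u = 1/u + R_nu(u), R_nu(u) = sum_{j>=0} k_{j+1} u^j,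
   is, after multiplication by G_nu, the coefficientwise identity
     M_nu(w) = 1 + sum_{j>=1} k_j (w M_nu(w))^j .                (R)
   [free_cum nu] is the coefficient sequence (k_j)_{j>=1} of R_nu solving (R)
   for unital nu (index 0 unused, set to 0), and [mom_of_cum k] is the unital
   moment sequence determined by (R) from a given R-transform. *)
Definition free_cum (nu : Mom) : nat -> C :=
  srec (fun n k => if n is 0 then 0
     else nu n - \sum_(1 <= j < n) k j * ps_exp (ps_mul (@ps_X C) nu) j n).

Definition mom_of_cum (k : nat -> C) : Mom :=
  srec (fun n m => if n is 0 then 1
     else \sum_(1 <= j < n.+1) k j * ps_exp (ps_mul (@ps_X C) m) j n).

Definition boxplus (mu nu : Mom) : Mom :=
  mom_of_cum (fun j => free_cum mu j + free_cum nu j).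

Definition moments (P : probability R R) : Mom :=
  fun n => (fine (\int[P]_x (x ^+ n)%:E))%:C.

Definition finite_moments (P : probability R R) : Prop :=
  forall n, P.-integrable setT (fun x : R => (x ^+ n)%:E).

(* 1/F_{s,t}(1/w) as a power series in w, where F_{s,t} = K_{mu_s} o G_{mu_t}:
   1/F = G_t / (1 + G_t R_s(G_t)) = g / D with g = w M_t(w),
   D = 1 + sum_{j>=1} k^s_j g^j. *)
Definition invF (ms mt : Mom) : nat -> C :=
  let g := ps_mul (@ps_X C) mt in
  let D := fun n => (n == 0%N)%:R
                    + \sum_(1 <= j < n.+1) free_cum ms j * ps_exp g j n in
  ps_mul g (ps_inv1 D).

(* K_{s,t}: Res_z(x) = 1/(z-x) = sum_n x^n w^{n+1}, and
   Res_{F(z)}(x) = 1/(F - x) = sum_k x^k (1/F)^{k+1};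
   so K_{s,t}(x^n) = [w^{n+1}] Res_{F(z)}(x) = sum_{k<=n} ([w^{n+1}](1/F)^{k+1}) x^k,
   extended linearly to C[x]. *)
Definition Kop_mono (ms mt : Mom) (n : nat) : {poly C} :=
  \sum_(k < n.+1) ps_exp (invF ms mt) k.+1 n.+1 *: 'X^k.
Definition Kop (ms mt : Mom) (p : {poly C}) : {poly C} :=
  \sum_(i < size p) p`_i *: Kop_mono ms mt i.

Definition free_conv_semigroup (mu : R -> probability R R) : Prop :=
  (forall t, 0 <= t -> finite_moments (mu t)) /\
  (forall t, 0 <= t -> forall j, (0 < j)%N ->
      free_cum (moments (mu t)) j = t%:C * free_cum (moments (mu 1)) j).

Definition martingale_poly (mu : R -> probability R R) (p : R -> {poly C}) : Prop :=
  forall s t, 0 <= s -> s < t ->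
    Kop (moments (mu s)) (moments (mu t)) (p t) = p s.

Definition fluctuation_family (mu : R -> probability R R)
    (V : nat -> R -> {poly C}) : Prop :=
  forall n, (0 < n)%N ->
    martingale_poly mu (fun t => (V n t)^`()) /\
    (forall t, 0 <= t -> size ((V n t)^`()) = n).

Definition is_basis_nat (b : nat -> {poly C}) : Prop :=
  (forall p : {poly C}, exists (N : nat) (c : nat -> C),
      p = \sum_(i < N) c i *: b i) /\
  (forall (N : nat) (c : nat -> C),
      \sum_(i < N) c i *: b i = 0 -> forall i, (i < N)%N -> c i = 0).

(* weak-* limit (moment-wise) of f eps as eps -> 0 in C, eps <> 0 *)
Definition wlim0 (f : C -> Mom) (l : Mom) : Prop :=
  forall n (e : R), 0 < e -> exists d : R, 0 < d /\
    forall eps : C, eps != 0 -> `|eps| < d%:C -> `|f eps n - l n| < e%:C.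

Definition Ct (mu : R -> probability R R) (t : R) (tau : Mom) : Mom :=
  boxplus (moments (mu t)) tau.
Definition is_DCt (mu : R -> probability R R) (t : R) (tau nu l : Mom) : Prop :=
  wlim0 (fun eps => fun n =>
           (Ct mu t (fun k => tau k + eps * nu k) n - Ct mu t tau n) / eps) l.
End FreeProb.

(* Main.v *)
Require Import Defs.
From HB Require Import structures.
From mathcomp Require Import all_boot all_order all_algebra.
From mathcomp Require Import complex.
From mathcomp Require Import all_classical all_reals all_analysis.
From mathcomp Require Import zify ring lra.
Import Order.TTheory GRing.Theory Num.Theory.
Local Open Scope ring_scope.
Set Implicit Arguments. Unset Strict Implicit. Unset Printing Implicit Defensive.

Section Srec.
Variable K : comPzRingType.

Lemma size_srec_seq (f : nat -> (nat -> K) -> K) n : size (srec_seq f n) = n.+1.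
Proof. by elim: n => [|n IH] //=; rewrite size_rcons IH. Qed.

Lemma nth_srec_seq (f : nat -> (nat -> K) -> K) n i :
  (i <= n)%N -> nth 0 (srec_seq f n) i = srec f i.
Proof.
elim: n => [|n IH] Hi.
  by move: Hi; rewrite leqn0 => /eqP ->.
rewrite /= nth_rcons size_srec_seq.
case: ltngtP Hi => // [Hlt _|-> _]; first by rewrite IH.
by rewrite /srec /= nth_rcons size_srec_seq ltnn eqxx.
Qed.

Lemma srecE (f : nat -> (nat -> K) -> K) n :
  srec f n = f n (fun i => if (i < n)%N then srec f i else 0).
Proof.
case: n => [|n].
  by rewrite /srec /=; congr (f 0%N); apply: boolp.funext => i.
rewrite /srec /= nth_rcons size_srec_seq ltnn eqxx; congr f.
apply: boolp.funext => i; case: ltnP => Hi.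
  by rewrite nth_srec_seq.
by rewrite nth_default // size_srec_seq.
Qed.

Lemma srec_ext (f g : nat -> (nat -> K) -> K) :
  (forall n b, f n b = g n b) -> forall n, srec f n = srec g n.
Proof.
move=> H n; elim/ltn_ind: n => n IH.
rewrite srecE [RHS]srecE H; congr g; apply: boolp.funext => i.
by case: ifP => // /IH.
Qed.

Lemma srec_uniq (f : nat -> (nat -> K) -> K) (a : nat -> K) :
  (forall n b b', (forall i, (i < n)%N -> b i = b' i) -> f n b = f n b') ->
  (forall n, a n = f n a) -> forall n, a n = srec f n.
Proof.
move=> Hf Ha n; elim/ltn_ind: n => n IH.
rewrite Ha srecE; apply: Hf => i Hi; by rewrite Hi IH.
Qed.

Lemma srec_fix (f : nat -> (nat -> K) -> K) :
  (forall n b b', (forall i, (i < n)%N -> b i = b' i) -> f n b = f n b') ->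
  forall n, srec f n = f n (srec f).
Proof.
move=> Hf n; rewrite srecE; apply: Hf => i Hi; by rewrite Hi.
Qed.
End Srec.

Lemma srec_morph (K K' : comPzRingType) (phi : {rmorphism K -> K'})
  (f : nat -> (nat -> K) -> K) (f' : nat -> (nat -> K') -> K') :
  (forall n b, phi (f n b) = f' n (fun i => phi (b i))) ->
  forall n, phi (srec f n) = srec f' n.
Proof.
move=> H n; elim/ltn_ind: n => n IH.
rewrite srecE [RHS]srecE H; congr f'; apply: boolp.funext => i.
by case: ifP => [/IH //|_]; rewrite rmorph0.
Qed.

Section Agr.
Variable K : comNzRingType.
Implicit Types p q r a b c : {poly K}.

Definition agr n p q := forall i, (i < n)%N -> p`_i = q`_i.

Lemma agr_refl n p : agr n p p. Proof. by []. Qed.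
Lemma agr_sym n p q : agr n p q -> agr n q p.
Proof. by move=> H i Hi; rewrite H. Qed.
Lemma agr_trans n p q r : agr n p q -> agr n q r -> agr n p r.
Proof. by move=> H1 H2 i Hi; rewrite H1 // H2. Qed.
Lemma agr_le m n p q : (m <= n)%N -> agr n p q -> agr m p q.
Proof. by move=> Hmn H i Hi; apply: H; apply: leq_trans Hmn. Qed.
Lemma agrD n p q p' q' : agr n p q -> agr n p' q' -> agr n (p + p') (q + q').
Proof. by move=> H1 H2 i Hi; rewrite !coefD H1 // H2. Qed.
Lemma agrN n p q : agr n p q -> agr n (- p) (- q).
Proof. by move=> H i Hi; rewrite !coefN H. Qed.
Lemma agrB n p q p' q' : agr n p q -> agr n p' q' -> agr n (p - p') (q - q').
Proof. by move=> H1 H2; apply: agrD => //; apply: agrN. Qed.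

Lemma agrM n p q p' q' : agr n p q -> agr n p' q' -> agr n (p * p') (q * q').
Proof.
move=> H1 H2 i Hi; rewrite !coefM; apply: eq_bigr => j _.
rewrite H1 ?H2 //; first by apply: leq_ltn_trans Hi; rewrite leq_subr.
by apply: leq_ltn_trans Hi; rewrite -ltnS.
Qed.

Lemma agrX n p q k : agr n p q -> agr n (p ^+ k) (q ^+ k).
Proof. by move=> H; elim: k => [|k IH] //; rewrite !exprS; apply: agrM. Qed.

Lemma agr0 p q : agr 0 p q. Proof. by []. Qed.

End Agr.

Section Agr2.
Variable K : comNzRingType.
Implicit Types p q r a b c : {poly K}.

Lemma X_factor r : r`_0 = 0 -> r = 'X * drop_poly 1 r.
Proof.
move=> r0; apply/polyP => k; rewrite coefXM coef_drop_poly.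
by case: k => [|k] //=; rewrite addn1.
Qed.

Lemma coef_exp_low r j i : r`_0 = 0 -> (i < j)%N -> (r ^+ j)`_i = 0.
Proof.
move=> /X_factor -> Hij.
by rewrite exprMn coefXnM Hij.
Qed.
End Agr2.

Section Agr3.
Variable K : comNzRingType.
Implicit Types p q r a b c : {poly K}.

Lemma coef_comp_polyM p r M i : (size p <= M)%N ->
  (p \Po r)`_i = \sum_(j < M) p`_j * (r ^+ j)`_i.
Proof.
move=> HM; rewrite coef_comp_poly.
rewrite -(subnKC HM) big_split_ord /= [X in _ = _ + X]big1 ?addr0 //.
by move=> j _; rewrite nth_default ?mul0r // leq_addr.
Qed.

Lemma agr_compr n p a b : agr n a b -> agr n (p \Po a) (p \Po b).
Proof.
move=> H i Hi; rewrite !coef_comp_poly; apply: eq_bigr => j _.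
by rewrite (agrX j H).
Qed.

Lemma agr_compl n p q r : r`_0 = 0 -> agr n p q -> agr n (p \Po r) (q \Po r).
Proof.
move=> r0 H i Hi.
rewrite (@coef_comp_polyM p r (maxn (size p) (size q))) ?leq_maxl //.
rewrite (@coef_comp_polyM q r (maxn (size p) (size q))) ?leq_maxr //.
apply: eq_bigr => j _; case: (leqP j i) => Hj.
  by rewrite H //; apply: leq_ltn_trans Hi.
by rewrite coef_exp_low ?mulr0.
Qed.

Lemma agr_deriv n p q : agr n.+1 p q -> agr n p^`() q^`().
Proof. by move=> H i Hi; rewrite !coef_deriv H. Qed.

Lemma agr_mul0 n (f : {poly K}) a b : f`_0 = 0 -> agr n a b -> agr n.+1 (f * a) (f * b).
Proof.
move=> f0 H i Hi; rewrite !coefM; apply: eq_bigr => [[j Hj]] _ /=.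
case: j Hj => [|j] Hj; first by rewrite f0 !mul0r.
by rewrite H //; move: Hj Hi; lia.
Qed.

Lemma agr_cancel n p q c : c`_0 = 1 -> agr n (p * c) (q * c) -> agr n p q.
Proof.
move=> c0 H; elim: n H => [|n IH] H //.
have IHn := IH (agr_le (leqnSn n) H).
move=> i; rewrite ltnS leq_eqVlt => /orP[/eqP ->|]; last by apply: IHn.
have := H n (ltnSn n); rewrite !coefM !big_ord_recr /= subnn c0 !mulr1.
rewrite (eq_bigr (fun j : 'I_n => q`_j * c`_(n - j))) //.
  by move/addrI.
by move=> [j Hj] _ /=; rewrite IHn.
Qed.
End Agr3.

Section Trunc.
Variable K : comNzRingType.
Implicit Types a b m k : nat -> K.

Definition trunc n a : {poly K} := \poly_(i < n) a i.

Lemma coef_trunc n a i : (trunc n a)`_i = if (i < n)%N then a i else 0.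
Proof. exact: coef_poly. Qed.

Lemma size_trunc n a : (size (trunc n a) <= n)%N.
Proof. exact: size_poly. Qed.

Lemma ps_mulE n a b i : (i < n)%N -> ps_mul a b i = (trunc n a * trunc n b)`_i.
Proof.
move=> Hi; rewrite /ps_mul coefM; apply: eq_bigr => [[j Hj]] _ /=.
rewrite !coef_trunc; have -> : (j < n)%N by apply: leq_ltn_trans Hi; rewrite -ltnS.
by have -> : (i - j < n)%N by apply: leq_ltn_trans Hi; rewrite leq_subr.
Qed.

Lemma agr_trunc_mul n a b : agr n (trunc n (ps_mul a b)) (trunc n a * trunc n b).
Proof. by move=> i Hi; rewrite coef_trunc Hi (ps_mulE _ _ Hi). Qed.

Lemma ps_expE n a j i : (i < n)%N -> ps_exp a j i = (trunc n a ^+ j)`_i.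
Proof.
move=> Hi; suff H : agr n (trunc n (ps_exp a j)) (trunc n a ^+ j).
  by rewrite -H // coef_trunc Hi.
elim: j => [|j IH].
  by move=> k Hk; rewrite coef_trunc Hk expr0 coef1.
have -> : ps_exp a j.+1 = ps_mul a (ps_exp a j) by [].
rewrite exprS; eapply agr_trans; first exact: (agr_trunc_mul a (ps_exp a j)).
by apply: agrM.
Qed.

Lemma agr_trunc_X n m : agr n (trunc n (ps_mul (@ps_X K) m)) ('X * trunc n m).
Proof.
move=> i Hi; rewrite coef_trunc Hi coefXM /ps_mul.
case: i Hi => [|i] Hi /=; first by rewrite big_ord1 /ps_X /= mul0r.
rewrite big_ord_recl big_ord_recl big1 ?addr0; last by move=> j _; rewrite /ps_X /= mul0r.
rewrite /ps_X /= mul0r mul1r add0r subSS subn0 coef_trunc.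
by have -> : (i < n)%N by apply: ltnW.
Qed.

Lemma ps_expXE n m j i : (i < n)%N ->
  ps_exp (ps_mul (@ps_X K) m) j i = (('X * trunc n m) ^+ j)`_i.
Proof.
by move=> Hi; rewrite (ps_expE _ j Hi) (agrX j (@agr_trunc_X n m) Hi).
Qed.

Lemma coef_comp_trunc n k m i : k 0%N = 0 -> (i < n)%N ->
  (trunc n k \Po ('X * trunc n m))`_i
   = \sum_(1 <= j < i.+1) k j * ps_exp (ps_mul (@ps_X K) m) j i.
Proof.
move=> k0 Hi; rewrite (@coef_comp_polyM _ _ _ n) ?size_trunc //.
rewrite -(big_mkord xpredT (fun j => (trunc n k)`_j * (('X * trunc n m) ^+ j)`_i)).
rewrite (big_cat_nat (n:=i.+1)) //= [X in _ + X]big1_seq ?addr0; last first.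
  move=> j /andP[_]; rewrite mem_index_iota => /andP[Hj _].
  by rewrite coef_exp_low ?mulr0 // coefXM.
rewrite big_ltn // coef_trunc (leq_ltn_trans (leq0n i) Hi) k0 mul0r add0r.
apply: eq_big_nat => j /andP[_ Hj].
rewrite coef_trunc (leq_trans Hj Hi) (ps_expXE _ _ Hi) //.
Qed.
End Trunc.

Section Cum.
Variable K : comNzRingType.
Implicit Types a b m k nu : nat -> K.

Definition hX m := ps_mul (@ps_X K) m.

Definition fcK nu : nat -> K :=
  srec (fun n k => if n is 0 then 0
     else nu n - \sum_(1 <= j < n) k j * ps_exp (ps_mul (@ps_X K) nu) j n).

Definition mcK k : nat -> K :=
  srec (fun n m => if n is 0 then 1
     else \sum_(1 <= j < n.+1) k j * ps_exp (ps_mul (@ps_X K) m) j n).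

Lemma fcK0 nu : fcK nu 0 = 0.
Proof. by rewrite /fcK srecE. Qed.

Lemma mcK0 k : mcK k 0 = 1.
Proof. by rewrite /mcK srecE. Qed.

Lemma coef0_exp (p : {poly K}) j : (p ^+ j)`_0 = p`_0 ^+ j.
Proof. by elim: j => [|j IH]; rewrite ?expr0 ?coef1 // !exprS coef0M IH. Qed.

Lemma ps_exp_diag m i : ps_exp (ps_mul (@ps_X K) m) i i = m 0%N ^+ i.
Proof.
rewrite (@ps_expXE _ i.+1) // exprMn coefXnM ltnn subnn coef0_exp coef_trunc //.
Qed.

Lemma ps_exp_prefix m m' n j : (forall i, (i < n)%N -> m i = m' i) ->
  ps_exp (ps_mul (@ps_X K) m) j n = ps_exp (ps_mul (@ps_X K) m') j n.
Proof.
move=> H; rewrite (@ps_expXE K n.+1 m j n (ltnSn n)) (@ps_expXE K n.+1 m' j n (ltnSn n)).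
apply: (@agrX K n.+1 _ _ j) => // i Hi.
rewrite !coefXM; case: i Hi => [|i] Hi //=; rewrite !coef_trunc.
by have Hi2 : (i < n.+1)%N := ltnW Hi; rewrite Hi2 H.

Qed.

Lemma fcK_fix nu n : (0 < n)%N ->
  fcK nu n = nu n - \sum_(1 <= j < n) fcK nu j * ps_exp (ps_mul (@ps_X K) nu) j n.
Proof.
move=> Hn; rewrite /fcK srec_fix; first by case: n Hn.
move=> [|n'] b b' Hb //; congr (_ - _); apply: eq_big_nat => j /andP[_ Hj].
by rewrite Hb.
Qed.

Lemma mcK_fix k n : (0 < n)%N ->
  mcK k n = \sum_(1 <= j < n.+1) k j * ps_exp (ps_mul (@ps_X K) (mcK k)) j n.
Proof.
move=> Hn; rewrite /mcK srec_fix; first by case: n Hn.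
move=> [|n'] b b' Hb //; apply: eq_big_nat => j _.
by rewrite (ps_exp_prefix _ Hb).
Qed.

Lemma fcK_rel nu n : nu 0%N = 1 ->
  agr n (trunc n nu) (1 + (trunc n (fcK nu) \Po ('X * trunc n nu))).
Proof.
move=> nu0 i Hi; rewrite coefD coef1 (coef_comp_trunc (nu) (fcK0 nu) Hi) coef_trunc Hi.
case: i Hi => [|i] Hi; first by rewrite big_geq // addr0.
rewrite add0r big_nat_recr // ps_exp_diag nu0 expr1n mulr1 [in RHS]fcK_fix //.
by rewrite /= addrC subrK.
Qed.

Lemma mcK_rel k n : k 0%N = 0 ->
  agr n (trunc n (mcK k)) (1 + (trunc n k \Po ('X * trunc n (mcK k)))).
Proof.
move=> k0 i Hi; rewrite coefD coef1 (coef_comp_trunc (mcK k) k0 Hi) coef_trunc Hi.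
case: i Hi => [|i] Hi; first by rewrite big_geq // addr0 mcK0.
by rewrite add0r mcK_fix.
Qed.

Lemma mcK_uniq k nu : k 0%N = 0 -> nu 0%N = 1 ->
  (forall n, agr n (trunc n nu) (1 + (trunc n k \Po ('X * trunc n nu)))) ->
  forall i, nu i = mcK k i.
Proof.
move=> k0 nu0 H; apply: srec_uniq.
  move=> [|n'] b b' Hb //; apply: eq_big_nat => j _.
  by rewrite (ps_exp_prefix _ Hb).
move=> [|n] //; have := H n.+2 n.+1 (ltnSn _).
rewrite coefD coef1 (coef_comp_trunc (nu) k0 (ltnSn _)) coef_trunc ltnSn add0r //.
Qed.

Lemma mcK_fcK nu : nu 0%N = 1 -> forall i, mcK (fcK nu) i = nu i.
Proof.
move=> nu0 i; symmetry; apply: mcK_uniq i; [exact: fcK0 | exact: nu0 | ].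
by move=> n; apply: fcK_rel.
Qed.
End Cum.

Section Morph.
Variables (K K' : comNzRingType) (phi : {rmorphism K -> K'}).

Lemma ps_mul_morph a b n :
  phi (ps_mul a b n) = ps_mul (fun i => phi (a i)) (fun i => phi (b i)) n.
Proof. by rewrite rmorph_sum; apply: eq_bigr => i _; rewrite rmorphM. Qed.

Lemma ps_X_morph : (fun i => phi (@ps_X K i)) = @ps_X K'.
Proof. by apply: boolp.funext => i; rewrite /ps_X rmorph_nat. Qed.

Lemma ps_exp_morph a j n :
  phi (ps_exp a j n) = ps_exp (fun i => phi (a i)) j n.
Proof.
elim: j n => [|j IH] n; first by rewrite /ps_exp /= /ps_one rmorph_nat.
have -> : ps_exp a j.+1 = ps_mul a (ps_exp a j) by [].
have -> : ps_exp (fun i => phi (a i)) j.+1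
   = ps_mul (fun i => phi (a i)) (ps_exp (fun i => phi (a i)) j) by [].
rewrite ps_mul_morph; congr ps_mul; apply: boolp.funext => i; exact: IH.
Qed.

Lemma hX_exp_morph m j n :
  phi (ps_exp (ps_mul (@ps_X K) m) j n)
   = ps_exp (ps_mul (@ps_X K') (fun i => phi (m i))) j n.
Proof.
rewrite ps_exp_morph; congr ps_exp; apply: boolp.funext => i.
by rewrite ps_mul_morph ps_X_morph.
Qed.

Lemma fcK_morph nu n : phi (fcK nu n) = fcK (fun i => phi (nu i)) n.
Proof.
apply: srec_morph => -[|k] b; first by rewrite rmorph0.
rewrite rmorphB rmorph_sum; congr (_ - _); apply: eq_bigr => j _.
by rewrite rmorphM hX_exp_morph.
Qed.

Lemma mcK_morph k n : phi (mcK k n) = mcK (fun i => phi (k i)) n.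
Proof.
apply: srec_morph => -[|n'] b; first by rewrite rmorph1.
rewrite rmorph_sum; apply: eq_bigr => j _.
by rewrite rmorphM hX_exp_morph.
Qed.
End Morph.

Section Deriv1.
Variable F : comNzRingType.
Local Notation P := {poly {poly F}}.
Implicit Types p q : P.

Definition E0 p : {poly F} := map_poly (fun c : {poly F} => c`_0) p.
Definition D1 p : {poly F} := map_poly (fun c : {poly F} => c`_1) p.

Lemma coefE0 p i : (E0 p)`_i = (p`_i)`_0.
Proof. by rewrite coef_map_id0 // coef0. Qed.
Lemma coefD1 p i : (D1 p)`_i = (p`_i)`_1.
Proof. by rewrite coef_map_id0 // coef0. Qed.

Lemma E0D p q : E0 (p + q) = E0 p + E0 q.
Proof. by apply/polyP => i; rewrite !(coefE0, coefD). Qed.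
Lemma D1D p q : D1 (p + q) = D1 p + D1 q.
Proof. by apply/polyP => i; rewrite !(coefD1, coefD). Qed.
Lemma E0N p : E0 (- p) = - E0 p.
Proof. by apply/polyP => i; rewrite !(coefE0, coefN). Qed.
Lemma D1N p : D1 (- p) = - D1 p.
Proof. by apply/polyP => i; rewrite !(coefD1, coefN). Qed.
Lemma E0B p q : E0 (p - q) = E0 p - E0 q.
Proof. by rewrite E0D E0N. Qed.
Lemma D1B p q : D1 (p - q) = D1 p - D1 q.
Proof. by rewrite D1D D1N. Qed.
Lemma E0C c : E0 c%:P = (c`_0)%:P.
Proof. by apply/polyP => i; rewrite !(coefE0, coefC); case: (i == 0%N); rewrite ?coef0. Qed.
Lemma D1C c : D1 c%:P = (c`_1)%:P.
Proof. by apply/polyP => i; rewrite !(coefD1, coefC); case: (i == 0%N); rewrite ?coef0. Qed.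
Lemma E01 : E0 1 = 1.
Proof. by rewrite E0C coef1. Qed.
Lemma D11 : D1 1 = 0.
Proof. by rewrite D1C coef1. Qed.

Lemma coef0M' (a b : {poly F}) : (a * b)`_0 = a`_0 * b`_0.
Proof. exact: coef0M. Qed.
Lemma coef1M (a b : {poly F}) : (a * b)`_1 = a`_0 * b`_1 + a`_1 * b`_0.
Proof. by rewrite coefM big_ord_recr big_ord1 /=. Qed.

Lemma E0M p q : E0 (p * q) = E0 p * E0 q.
Proof.
apply/polyP => i; rewrite coefE0 !coefM coef_sum; apply: eq_bigr => j _.
by rewrite coef0M !coefE0.
Qed.

Lemma D1M p q : D1 (p * q) = E0 p * D1 q + D1 p * E0 q.
Proof.
apply/polyP => i; rewrite coefD1 coefD !coefM coef_sum -big_split /=.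
by apply: eq_bigr => j _; rewrite coef1M !coefE0 !coefD1.
Qed.

Lemma E0X : E0 'X = 'X.
Proof. by apply/polyP => i; rewrite coefE0 !coefX; case: (i == 1%N); rewrite ?coef1 ?coef0. Qed.
Lemma D1X : D1 'X = 0.
Proof. by apply/polyP => i; rewrite coefD1 !coefX coef0; case: (i == 1%N); rewrite ?coef1 ?coef0. Qed.

Lemma E0exp p j : E0 (p ^+ j) = E0 p ^+ j.
Proof. by elim: j => [|j IH]; rewrite ?expr0 ?E01 // !exprS E0M IH. Qed.

Lemma E0comp p q : E0 (p \Po q) = E0 p \Po E0 q.
Proof.
elim/poly_ind: p => [|p c IH].
  by rewrite comp_poly0 (_ : E0 0 = 0) ?comp_poly0 //; apply/polyP => i; rewrite coefE0 !coef0.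
rewrite comp_poly_MXaddC !E0D !E0M IH E0C E0X comp_poly_MXaddC //.
Qed.

Lemma D1comp p q :
  D1 (p \Po q) = D1 p \Po E0 q + ((E0 p)^`() \Po E0 q) * D1 q.
Proof.
elim/poly_ind: p => [|p c IH].
  have E : E0 0 = 0 by apply/polyP => i; rewrite coefE0 !coef0.
  have D : D1 0 = 0 by apply/polyP => i; rewrite coefD1 !coef0.
  by rewrite comp_poly0 D E deriv0 !comp_poly0 mul0r addr0.
rewrite comp_poly_MXaddC D1D D1M IH E0comp D1C.
rewrite !D1D !D1M D1X E0X mulr0 add0r D1C E0D E0M E0X E0C derivMXaddC.
rewrite comp_polyD !comp_polyM comp_polyX !comp_polyC comp_polyD.
rewrite comp_polyM comp_polyX; ring.
Qed.

Lemma agrE0 n p q : agr n p q -> agr n (E0 p) (E0 q).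
Proof. by move=> H i Hi; rewrite !coefE0 H. Qed.
Lemma agrD1 n p q : agr n p q -> agr n (D1 p) (D1 q).
Proof. by move=> H i Hi; rewrite !coefD1 H. Qed.

Lemma E0trunc n (a : nat -> {poly F}) : E0 (trunc n a) = trunc n (fun i => (a i)`_0).
Proof. by apply/polyP => i; rewrite coefE0 !coef_trunc; case: ifP; rewrite ?coef0. Qed.
Lemma D1trunc n (a : nat -> {poly F}) : D1 (trunc n a) = trunc n (fun i => (a i)`_1).
Proof. by apply/polyP => i; rewrite coefD1 !coef_trunc; case: ifP; rewrite ?coef0. Qed.
End Deriv1.

Section Inv.
Variable K : comNzRingType.
Implicit Types a b m k nu : nat -> K.

Lemma inv1_fix a n : (0 < n)%N ->
  ps_inv1 a n = - \sum_(1 <= i < n.+1) a i * ps_inv1 a (n - i)%N.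
Proof.
move=> Hn; rewrite /ps_inv1 srec_fix; first by case: n Hn.
move=> [|n'] b b' Hb //; congr (- _); apply: eq_big_nat => i /andP[Hi _].
by rewrite Hb //; move: Hi; lia.
Qed.

Lemma inv1_rel a n : a 0%N = 1 -> agr n (trunc n a * trunc n (ps_inv1 a)) 1.
Proof.
move=> a0 i Hi; rewrite -(ps_mulE _ _ Hi) coef1 /ps_mul big_ord_recl a0 mul1r subn0.
case: i Hi => [|i] Hi.
  by rewrite big_ord0 addr0 /ps_inv1 srecE.
rewrite inv1_fix // big_add1 /= big_mkord.
have -> : \sum_(i0 < i.+1) a (bump 0 i0) * ps_inv1 a (i.+1 - bump 0 i0)%N
        = \sum_(i0 < i.+1) a i0.+1 * ps_inv1 a (i.+1 - i0.+1)%N by [].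
by rewrite addNr.
Qed.

Definition invFg ms mt : nat -> K :=
  let g := ps_mul (@ps_X K) mt in
  let D := fun n => (n == 0%N)%:R
                    + \sum_(1 <= j < n.+1) fcK ms j * ps_exp g j n in
  ps_mul g (ps_inv1 D).

Lemma invFg0 ms mt : invFg ms mt 0 = 0.
Proof. by rewrite /invFg /ps_mul !big_ord1 /ps_X /= !mul0r. Qed.

Lemma invF_rel ms mt n :
  agr n (trunc n (invFg ms mt) * (1 + (trunc n (fcK ms) \Po ('X * trunc n mt))))
        ('X * trunc n mt).
Proof.
set D := fun n => (n == 0%N)%:R
   + \sum_(1 <= j < n.+1) fcK ms j * ps_exp (ps_mul (@ps_X K) mt) j n.
have HD : agr n (trunc n D) (1 + (trunc n (fcK ms) \Po ('X * trunc n mt))).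
  move=> i Hi; rewrite coef_trunc Hi coefD coef1 (coef_comp_trunc mt (fcK0 ms) Hi).
  by [].
have HD0 : D 0%N = 1 by rewrite /D big_geq // addr0.
have Hf : agr n (trunc n (invFg ms mt))
   (('X * trunc n mt) * trunc n (ps_inv1 D)).
  eapply agr_trans; first exact: agr_trunc_mul.
  by apply: agrM => //; apply: agr_trunc_X.
eapply agr_trans; first exact: (agrM Hf (agr_sym HD)).
rewrite -mulrA [X in _ * X]mulrC.
eapply agr_trans; first exact: (agrM (@agr_refl _ n _) (inv1_rel (n:=n) HD0)).
by rewrite mulr1.
Qed.
End Inv.

Section Uniq.
Variable K : comNzRingType.
Lemma agr_uniq n (f k Y Y' : {poly K}) : f`_0 = 0 ->
  agr n Y (f * (1 + (k \Po Y))) -> agr n Y' (f * (1 + (k \Po Y'))) -> agr n Y Y'.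
Proof.
move=> f0 H H'.
suff : forall m, (m <= n)%N -> agr m Y Y' by apply.
elim=> [|m IH] Hm; first exact: agr0.
have Hm' : agr m Y Y' by apply: IH; apply: ltnW.
eapply agr_trans; first exact: (agr_le Hm H).
eapply agr_trans; last exact: (agr_sym (agr_le Hm H')).
apply: agr_mul0 => //; apply: agrD => //; exact: agr_compr.
Qed.
End Uniq.

Section Core.
Variable F : comNzRingType.
Implicit Types p q : {poly F}.

Lemma comp_poly1 p : 1 \Po p = 1.
Proof. by rewrite -polyC1 comp_polyC. Qed.

Lemma agr_eq n p p' q q' : p = p' -> q = q' -> agr n p' q' -> agr n p q.
Proof. by move=> -> ->. Qed.

Lemma core n (S Hm Nu L d ks kts f Q : {poly F}) :
  Hm`_0 = 1 -> f`_0 = 0 ->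
  agr n.+1 S (1 + (ks \Po ('X * S))) ->
  agr n.+1 Hm (1 + (kts \Po ('X * Hm))) ->
  agr n.+1 (f * (1 + (ks \Po ('X * Hm)))) ('X * Hm) ->
  agr n.+1 Nu ((d \Po ('X * S)) + (ks^`() \Po ('X * S)) * ('X * Nu)) ->
  agr n.+1 L ((d \Po ('X * Hm)) + (kts^`() \Po ('X * Hm)) * ('X * L)) ->
  agr n.+1 Nu ('X * Q) ->
  agr n L ('X * f^`() * (Q \Po f)).
Proof.
move=> Hm0 f0 HS HH Hf HN HL HQ.
set hs := 'X * S; set H := 'X * Hm.
have X0 : ('X : {poly F})`_0 = 0 by rewrite coefX.
have s1 : agr n.+1 (hs \Po f) H.
  apply: (agr_uniq (k := ks) f0).
    have E : hs \Po f = (('X * (1 + (ks \Po hs))) \Po f) + ((hs - 'X * (1 + (ks \Po hs))) \Po f).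
      by rewrite -comp_polyD addrC subrK.
    have E2 : ('X * (1 + (ks \Po hs))) \Po f = f * (1 + (ks \Po (hs \Po f))).
      by rewrite comp_polyM comp_polyX comp_polyD comp_poly1 comp_polyA.
    move=> i Hi.
    have Z : ((hs - 'X * (1 + (ks \Po hs))) \Po f)`_i = 0.
      have : agr n.+1 (hs \Po f) (('X * (1 + (ks \Po hs))) \Po f).
        apply: agr_compl => //; apply: (agr_le (leqnSn _)); exact: agr_mul0.
      by move=> /(_ i Hi); rewrite comp_polyB coefB => ->; rewrite subrr.
    by rewrite {1}E E2 coefD Z addr0.
  exact: agr_sym.
have s2 : agr n.+1 (Nu \Po f) ((d \Po H) + (ks^`() \Po H) * (f * (Nu \Po f))).
  eapply agr_trans; first by apply: agr_compl f0 HN.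
  rewrite comp_polyD comp_polyM comp_polyM comp_polyX -!comp_polyA.
  apply: agrD; first exact: agr_compr.
  by apply: agrM => //; apply: agr_compr.
set a := 1 - 'X * (kts^`() \Po H).
set b := 1 - f * (ks^`() \Po H).
have s3 : agr n.+1 (L * a) ((Nu \Po f) * b).
  have E1 : L * a = L - (kts^`() \Po H) * ('X * L) by rewrite /a; ring.
  have E2 : (Nu \Po f) * b = (Nu \Po f) - (ks^`() \Po H) * (f * (Nu \Po f)) by rewrite /b; ring.
  rewrite E1 E2.
  have T1 : agr n.+1 (L - (kts^`() \Po H) * ('X * L)) (d \Po H).
    eapply agr_trans; first exact: (agrB HL (@agr_refl _ _ ((kts^`() \Po H) * ('X * L)))).
    by apply: agr_eq (@agr_refl _ _ _) => //; rewrite addrK.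
  have T2 : agr n.+1 ((Nu \Po f) - (ks^`() \Po H) * (f * (Nu \Po f))) (d \Po H).
    eapply agr_trans; first exact: (agrB s2 (@agr_refl _ _ ((ks^`() \Po H) * (f * (Nu \Po f))))).
    by apply: agr_eq (@agr_refl _ _ _) => //; rewrite addrK.
  exact: agr_trans T1 (agr_sym T2).
have s4 : agr n (H^`() * a) Hm.
  have HH2 : agr n.+2 H ('X * (1 + (kts \Po H))) by apply: agr_mul0.
  have D := agr_deriv HH2.
  have E : ('X * (1 + (kts \Po H)))^`() = (1 + (kts \Po H)) + 'X * ((kts^`() \Po H) * H^`()).
    by rewrite derivM derivX mul1r derivD deriv_comp -polyC1 derivC add0r.
  rewrite E in D.
  have E2 : H^`() * a = H^`() - 'X * ((kts^`() \Po H) * H^`()) by rewrite /a; ring.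
  rewrite E2; apply: (agr_le (leqnSn _)).
  eapply agr_trans; first exact: (agrB D (@agr_refl _ _ ('X * ((kts^`() \Po H) * H^`())))).
  by rewrite addrK; apply: agr_sym.
have s5 : agr n (H^`() * b) (f^`() * (1 + (ks \Po H))).
  have D := agr_deriv (agr_sym Hf).
  have E : (f * (1 + (ks \Po H)))^`() = f^`() * (1 + (ks \Po H)) + f * ((ks^`() \Po H) * H^`()).
    by rewrite derivM derivD deriv_comp -polyC1 derivC add0r.
  rewrite E in D.
  have E2 : H^`() * b = H^`() - f * ((ks^`() \Po H) * H^`()) by rewrite /b; ring.
  rewrite E2.
  eapply agr_trans; first exact: (agrB D (@agr_refl _ _ (f * ((ks^`() \Po H) * H^`())))).
  by rewrite addrK.
have s6 : agr n.+1 (Nu \Po f) (f * (Q \Po f)).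
  by apply: agr_eq (agr_compl f0 HQ) => //; rewrite comp_polyM comp_polyX.
have c0 : (a * H^`())`_0 = 1.
  rewrite coef0M /a coefB coef1 coefXM /= subr0 mul1r coef_deriv /H coefXM /=.
  by rewrite Hm0.
apply: (agr_cancel c0).
have L1 : agr n (L * (a * H^`())) ((Q \Po f) * f^`() * H).
  rewrite mulrA; eapply agr_trans.
    exact: (agrM (agr_le (leqnSn _) s3) (@agr_refl _ _ H^`())).
  eapply agr_trans.
    apply: (agrM (agrM (agr_le (leqnSn _) s6) (@agr_refl _ _ b)) (@agr_refl _ _ H^`())).
  have E : f * (Q \Po f) * b * H^`() = f * (Q \Po f) * (H^`() * b) by ring.
  rewrite E; eapply agr_trans; first exact: (agrM (@agr_refl _ _ _) s5).
  have E' : f * (Q \Po f) * (f^`() * (1 + (ks \Po H)))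
          = (Q \Po f) * f^`() * (f * (1 + (ks \Po H))) by ring.
  rewrite E'; apply: agrM => //; exact: (agr_le (leqnSn _) Hf).
have L2 : agr n ('X * f^`() * (Q \Po f) * (a * H^`())) ((Q \Po f) * f^`() * H).
  have E : 'X * f^`() * (Q \Po f) * (a * H^`()) = 'X * f^`() * (Q \Po f) * (H^`() * a) by ring.
  rewrite E; eapply agr_trans; first exact: (agrM (@agr_refl _ _ _) s4).
  by apply: agr_eq (@agr_refl _ _ _) => //; rewrite /H; ring.
exact: agr_trans L1 (agr_sym L2).
Qed.
End Core.

Lemma trunc_ext (K : comNzRingType) n (a b : nat -> K) :
  (forall i, a i = b i) -> trunc n a = trunc n b.
Proof. by move=> H; apply/polyP => i; rewrite !coef_trunc H. Qed.

Lemma coefX_deriv (K : comNzRingType) (R : {poly K}) i :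
  ('X * R^`())`_i = R`_i *+ i.
Proof. by rewrite coefXM; case: i => [|i] //=; rewrite coef_deriv. Qed.

Section Eps.
Variable F : comNzRingType.
Variables (ms mT nu eta kt : nat -> F).

Definition te i : {poly F} := (ms i)%:P + (nu i)%:P * 'X.
Definition krho j : {poly F} := (kt j)%:P + fcK te j.
Definition rho := mcK krho.

Lemma te0 i : (te i)`_0 = ms i.
Proof. by rewrite /te coefD coefC coefMX /= addr0. Qed.
Lemma te1 i : (te i)`_1 = nu i.
Proof. by rewrite /te coefD coefC coefMX /= coefC add0r. Qed.

Lemma fcK_te0 j : (fcK te j)`_0 = fcK ms j.
Proof.
rewrite -horner_coef0 -horner_evalE fcK_morph; congr fcK.
by apply: boolp.funext => i; rewrite /= ?horner_evalE horner_coef0 te0.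
Qed.

Hypotheses (ms0 : ms 0%N = 1) (mT0 : mT 0%N = 1) (nu0 : nu 0%N = 0)
  (Heta : forall j, nu j.+1 = j.+1%:R * eta j)
  (Hsg : forall j, fcK mT j = kt j + fcK ms j).

Lemma kt0 : kt 0%N = 0.
Proof. by have := Hsg 0; rewrite !fcK0 addr0 => <-. Qed.

Lemma rho0 i : (rho i)`_0 = mT i.
Proof.
rewrite -horner_coef0 -horner_evalE /rho mcK_morph.
rewrite (_ : (fun i0 => horner_eval 0 (krho i0)) = fcK mT) ?mcK_fcK //.
apply: boolp.funext => j; rewrite /= ?horner_evalE horner_coef0 /krho coefD coefC /=.
by rewrite fcK_te0 Hsg.
Qed.

Lemma eps_main i :
  (rho i)`_1 = i%:R * \sum_(j < i) eta j * ps_exp (invFg ms mT) j.+1 i.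
Proof.
set N := i.+2.
set lam := fun k => (rho k)`_1.
pose S := trunc N ms. pose Hm := trunc N mT. pose Nu := trunc N nu.
pose L := trunc N lam. pose d := D1 (trunc N (fcK te)).
pose ks := trunc N (fcK ms). pose kts := trunc N (fcK mT).
pose f := trunc N (invFg ms mT). pose Q := trunc N (fun k => nu k.+1).
have Hm0 : Hm`_0 = 1 by rewrite coef_trunc.
have f0 : f`_0 = 0 by rewrite coef_trunc /= invFg0.
have HS : agr N S (1 + (ks \Po ('X * S))) by apply: fcK_rel.
have HH : agr N Hm (1 + (kts \Po ('X * Hm))) by apply: fcK_rel.
have Hf : agr N (f * (1 + (ks \Po ('X * Hm)))) ('X * Hm) by apply: invF_rel.
have te_0 : te 0%N = 1 by rewrite /te ms0 nu0 mul0r addr0.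
have HN : agr N Nu ((d \Po ('X * S)) + (ks^`() \Po ('X * S)) * ('X * Nu)).
  have HA := agrD1 (fcK_rel (n:=N) te_0).
  rewrite D1D D11 add0r D1comp D1trunc E0trunc !E0M !D1M E0X D1X !E0trunc !D1trunc in HA.
  rewrite mul0r addr0 in HA.
  rewrite (trunc_ext _ fcK_te0) (trunc_ext _ te0) (trunc_ext _ te1) in HA.
  by rewrite /d D1trunc.
have kr0 : krho 0%N = 0 by rewrite /krho kt0 fcK0 addr0.
have HL : agr N L ((d \Po ('X * Hm)) + (kts^`() \Po ('X * Hm)) * ('X * L)).
  have HB := agrD1 (mcK_rel (n:=N) kr0).
  rewrite D1D D11 add0r D1comp D1trunc E0trunc !E0M !D1M E0X D1X !E0trunc !D1trunc in HB.
  rewrite mul0r addr0 in HB.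
  have E1 : forall j, (krho j)`_1 = (fcK te j)`_1.
    by move=> j; rewrite /krho coefD coefC add0r.
  have E2 : forall j, (krho j)`_0 = fcK mT j.
    by move=> j; rewrite /krho coefD coefC /= fcK_te0 Hsg.
  rewrite (trunc_ext _ E1) (trunc_ext _ E2) (trunc_ext _ rho0) in HB.
  rewrite /d D1trunc; exact: HB.
have HQ : agr N Nu ('X * Q).
  move=> k Hk; rewrite coefXM !coef_trunc Hk; case: k Hk => [|k] Hk //=.
  by rewrite ltnW.
have C := core Hm0 f0 HS HH Hf HN HL HQ (ltnSn i).
rewrite /L coef_trunc /= ltnS leqnSn in C.
rewrite /lam /= in C; rewrite C.
pose P := trunc N.+1 (fun k => if k is k'.+1 then eta k' else 0).
have HP : P^`() = Q.
  apply/polyP => k; rewrite coef_deriv !coef_trunc ltnS.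
  by case: ifP => _; rewrite ?mul0rn // Heta mulr_natl.
have -> : 'X * f^`() * (Q \Po f) = 'X * (P \Po f)^`().
  by rewrite deriv_comp HP; ring.
rewrite coefX_deriv mulr_natl; congr (_ *+ _).
rewrite (@coef_comp_polyM _ _ _ N.+1) ?size_trunc // big_ord_recl.
rewrite coef_trunc /= mul0r add0r.
rewrite /N big_ord_recr big_ord_recr /= !coef_trunc /=.
rewrite !ltnS leqnn ltnW // !(@coef_exp_low _ f) ?mulr0 ?addr0 //.
apply: eq_bigr => [[j Hj]] _ /=; rewrite coef_trunc /=.
have -> : (j.+1 < N.+1)%N by rewrite /N !ltnS ltnW // ltnW.
rewrite add0n (_ : bump 0 j = j.+1) //.
have -> : ps_mul (invFg ms mT) (ps_exp (invFg ms mT) j) i = ps_exp (invFg ms mT) j.+1 i by [].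
by rewrite (ps_expE _ j.+1 (leqnSn i.+1)).
Qed.
End Eps.

Section Conv.
Variable R : realType.
Local Notation C := R[i].
Lemma free_cumE (nu : Mom R) : free_cum nu = @fcK C nu.
Proof. reflexivity. Qed.
Lemma mom_of_cumE (k : nat -> C) : mom_of_cum k = @mcK C k.
Proof. reflexivity. Qed.
Lemma invFE (ms mt : Mom R) : Defs.invF ms mt = @invFg C ms mt.
Proof. reflexivity. Qed.
End Conv.

Section Pair.
Variable R : realType.
Local Notation C := R[i].
Implicit Types (nu : Mom R) (p q : {poly C}).

Lemma pairingE nu p M : (size p <= M)%N ->
  pairing nu p = \sum_(i < M) p`_i * nu i.
Proof.
move=> HM; rewrite /pairing -(subnKC HM) big_split_ord /=.
rewrite [X in _ = _ + X]big1 ?addr0 // => i _.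
by rewrite nth_default ?mul0r // leq_addr.
Qed.

Lemma pairingD nu p q : pairing nu (p + q) = pairing nu p + pairing nu q.
Proof.
set M := maxn (size p) (size q).
have Hp : (size p <= M)%N by apply: leq_maxl.
have Hq : (size q <= M)%N by apply: leq_maxr.
have Hpq : (size (p + q)%R <= M)%N by apply: leq_trans (size_polyD _ _) _; rewrite geq_max Hp Hq.
rewrite (pairingE _ Hp) (pairingE _ Hq) (pairingE _ Hpq) -big_split /=.
by apply: eq_bigr => i _; rewrite coefD mulrDl.
Qed.

Lemma pairingZ nu c p : pairing nu (c *: p) = c * pairing nu p.
Proof.
rewrite (@pairingE _ _ (size p)) ?size_scale_leq // /pairing mulr_sumr.
by apply: eq_bigr => i _; rewrite coefZ mulrA.
Qed.

Lemma pairing0 nu : pairing nu 0 = 0.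
Proof. by rewrite /pairing size_poly0 big_ord0. Qed.

Lemma pairing_sum nu N (F : nat -> {poly C}) :
  pairing nu (\sum_(i < N) F i) = \sum_(i < N) pairing nu (F i).
Proof.
elim: N => [|N IH]; first by rewrite !big_ord0 pairing0.
by rewrite !big_ord_recr /= pairingD IH.
Qed.

Lemma pairingXn nu m : pairing nu 'X^m = nu m.
Proof.
rewrite /pairing size_polyXn (bigD1 (Ordinal (ltnSn m))) //= coefXn eqxx mul1r.
rewrite big1 ?addr0 // => -[j Hj] /= Hne; rewrite coefXn.
have -> : (j == m) = false.
  apply/negbTE; apply: contra Hne => /eqP Ej; apply/eqP/val_inj => /=; exact Ej.
by rewrite mul0r.
Qed.

Lemma pairing1 nu : pairing nu 1 = nu 0%N.
Proof. by rewrite -(expr0 'X) pairingXn. Qed.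

Lemma basis_of_sizes (b : nat -> {poly C}) :
  (forall i, size (b i) = i.+1) -> is_basis_nat b.
Proof.
move=> Hb; split.
  suff H : forall m p, (size p <= m)%N -> exists c : nat -> C, p = \sum_(i < m) c i *: b i.
    by move=> p; have [c Hc] := H _ p (leqnn _); exists (size p), c.
  elim=> [|m IH] p Hp.
    by exists (fun _ => 0); rewrite big_ord0; apply/size_poly_leq0P.
  set cm := p`_m / lead_coef (b m).
  have lb : lead_coef (b m) != 0 by rewrite lead_coef_eq0 -size_poly_eq0 Hb.
  have Hq : (size (p - cm *: b m)%R <= m)%N.
    apply/leq_sizeP => j Hj; rewrite coefB coefZ.
    case: (ltngtP j m) Hj => // [Hj _|-> _].
      rewrite !nth_default ?mulr0 ?subr0 //; first by rewrite Hb.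
      exact: leq_trans Hp Hj.
    have lb2 : (b m)`_m != 0 by move: lb; rewrite lead_coefE Hb.
    by rewrite /cm lead_coefE Hb /= divfK ?subrr.
  have [c Hc] := IH _ Hq.
  exists (fun i => if i == m then cm else c i); rewrite big_ord_recr /= eqxx.
  rewrite (eq_bigr (fun i : 'I_m => c i *: b i)); last first.
    by move=> [i Hi] _ /=; rewrite (ltn_eqF Hi).
  by rewrite -Hc subrK.
elim=> [|N IH] c Hsum i Hi //.
rewrite big_ord_recr /= in Hsum.
have cN : c N = 0.
  have := congr1 (fun p => p`_N) Hsum; rewrite coefD coef_sum coefZ coef0.
  rewrite big1 ?add0r; last first.
    by move=> [j Hj] _ /=; rewrite coefZ nth_default ?mulr0 // Hb.
  move/eqP; rewrite mulf_eq0 => /orP[/eqP //|].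
  have : lead_coef (b N) != 0 by rewrite lead_coef_eq0 -size_poly_eq0 Hb.
  by rewrite lead_coefE Hb /= => /negPf ->.
rewrite cN scale0r addr0 in Hsum.
move: Hi; rewrite ltnS leq_eqVlt => /orP[/eqP -> //|Hi].
exact: IH Hsum i Hi.
Qed.

Lemma basis_unique (b : nat -> {poly C}) (l1 l2 : Mom R) :
  is_basis_nat b -> (forall i, pairing l1 (b i) = pairing l2 (b i)) ->
  forall m, l1 m = l2 m.
Proof.
move=> [Hspan _] H m; have [N [c Hc]] := Hspan 'X^m.
rewrite -!pairingXn Hc (pairing_sum l1 N (fun i => c i *: b i)) (pairing_sum l2 N (fun i => c i *: b i)).
apply: eq_bigr => i _.
by rewrite !pairingZ H.
Qed.

Lemma size_of_deriv (p : {poly C}) n : (0 < n)%N -> size p^`() = n -> size p = n.+1.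
Proof.
move=> Hn Hs; apply/eqP; rewrite eqn_leq; apply/andP; split.
  apply/leq_sizeP => j Hj.
  have : p^`()`_j.-1 = 0 by rewrite nth_default // Hs -ltnS prednK //; apply: leq_ltn_trans Hj.
  rewrite coef_deriv prednK; last by apply: leq_ltn_trans Hj.
  by move/eqP; rewrite mulrn_eq0 => /orP[|/eqP //]; case: j Hj.
rewrite ltnNge; apply/negP => /leq_sizeP /(_ n (leqnn n)) pn.
have : p^`()`_n.-1 != 0.
  have : lead_coef p^`() != 0 by rewrite lead_coef_eq0 -size_poly_eq0 Hs -lt0n.
  by rewrite lead_coefE Hs.
by rewrite coef_deriv prednK // pn mul0rn eqxx.
Qed.
End Pair.

Section KopPair.
Variable R : realType.
Local Notation C := R[i].
Implicit Types (nu eta : Mom R) (p W : {poly C}).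

Lemma size_deriv_le p : (size p^`() <= size p)%N.
Proof.
apply/leq_sizeP => j Hj; rewrite coef_deriv nth_default ?mul0rn //.
exact: leq_trans Hj _.
Qed.

Lemma pairing_Kop_mono eta ms mt a :
  pairing eta (Kop_mono ms mt a)
   = \sum_(k < a.+1) ps_exp (Defs.invF ms mt) k.+1 a.+1 * eta k.
Proof.
rewrite /Kop_mono (pairing_sum eta a.+1 (fun k => ps_exp (Defs.invF ms mt) k.+1 a.+1 *: 'X^k)).
by apply: eq_bigr => k _; rewrite pairingZ pairingXn.
Qed.

Lemma pairing_Kop eta ms mt p M : (size p <= M)%N ->
  pairing eta (Kop ms mt p) = \sum_(a < M) p`_a * pairing eta (Kop_mono ms mt a).
Proof.
move=> HM; rewrite /Kop (pairing_sum eta (size p) (fun a => p`_a *: Kop_mono ms mt a)).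
rewrite -(subnKC HM) big_split_ord /= [X in _ = _ + X]big1 ?addr0.
  by apply: eq_bigr => a _; rewrite pairingZ.
by move=> a _; rewrite nth_default ?mul0r // leq_addr.
Qed.

Lemma kop_pair nu eta ms mT W :
  nu 0%N = 0 -> (forall j, nu j.+1 = j.+1%:R * eta j) ->
  pairing (fun i => i%:R * \sum_(j < i) eta j * ps_exp (invFg ms mT) j.+1 i) W
  = pairing eta (Kop ms mT W^`()).
Proof.
move=> nu0 Heta.
rewrite (@pairingE _ _ _ (size W).+1) // big_ord_recl mul0r mulr0 add0r.
rewrite (@pairing_Kop _ _ _ _ (size W)) ?size_deriv_le //.
apply: eq_bigr => a _; rewrite pairing_Kop_mono coef_deriv /= /bump /= add1n.
rewrite -(mulr_natr (W`_a.+1)) -mulrA; congr (_ * (_ * _)); apply: eq_bigr => k _.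
by rewrite mulrC.
Qed.

Lemma deriv_pair nu eta W :
  nu 0%N = 0 -> (forall j, nu j.+1 = j.+1%:R * eta j) ->
  pairing eta W^`() = pairing nu W.
Proof.
move=> nu0 Heta.
rewrite [RHS](@pairingE _ _ _ (size W).+1) // big_ord_recl nu0 mulr0 add0r.
rewrite (@pairingE _ _ _ (size W)) ?size_deriv_le //.
apply: eq_bigr => a _; rewrite coef_deriv /= /bump /= add1n Heta.
by rewrite -(mulr_natr (W`_a.+1)) mulrA.
Qed.
End KopPair.

Section Lim.
Local Open Scope complex_scope.
Variable R : realType.
Local Notation C := R[i].

Definition nrm (z : C) : R := Num.sqrt ((complex.Re z)^+2 + (complex.Im z)^+2).
Lemma normE (z : C) : `|z| = (nrm z)%:C.
Proof. exact: normc_def. Qed.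
Lemma nrm_ge0 (z : C) : 0 <= nrm z.
Proof. exact: sqrtr_ge0. Qed.

Lemma horner_bound (q : {poly C}) (x : C) : `|x| <= 1 ->
  `|q.[x]| <= \sum_(i < size q) `|q`_i|.
Proof.
move=> Hx; rewrite horner_coef; apply: le_trans (ler_norm_sum _ _ _) _.
apply: ler_sum => i _; rewrite normrM normrX.
apply: ler_piMr => //; exact: exprn_ile1.
Qed.

Lemma poly_lim (p : {poly C}) (e : R) : 0 < e -> exists d : R, 0 < d /\
  forall eps : C, eps != 0 -> `|eps| < d%:C ->
    `|(p.[eps] - p.[0]) / eps - p`_1| < e%:C.
Proof.
move=> He.
set q := drop_poly 2 p.
have Hp : p = (p`_0)%:P + (p`_1)%:P * 'X + q * 'X^2.
  apply/polyP => i; rewrite !coefD coefC coefMX coefMXn coef_drop_poly coefC.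
  by case: i => [|[|i]] //=; rewrite ?addr0 ?add0r // subn2 addn2.
set Mr := \sum_(i < size q) nrm q`_i.
have Mr0 : 0 <= Mr by apply: sumr_ge0 => i _; exact: nrm_ge0.
have HM : \sum_(i < size q) `|q`_i| = Mr%:C.
  by rewrite /Mr rmorph_sum; apply: eq_bigr => i _; rewrite normE.
exists (Num.min 1 (e / (Mr + 1))); split.
  by rewrite lt_min ltr01 /= divr_gt0 // ltr_wpDl.
move=> eps eps0 Heps.
have Hd : nrm eps < Num.min 1 (e / (Mr + 1)) by rewrite -ltcR -normE.
have Hd1 : nrm eps < 1 by move: Hd; rewrite lt_min => /andP[].
have Hd2 : nrm eps < e / (Mr + 1) by move: Hd; rewrite lt_min => /andP[].
have E : (p.[eps] - p.[0]) / eps - p`_1 = eps * q.[eps].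
  rewrite {1}Hp horner_coef0 !hornerD hornerC hornerM hornerC hornerX hornerM hornerXn.
  by field.
rewrite E normrM.
have Hq : `|q.[eps]| <= Mr%:C.
  rewrite -HM; apply: horner_bound.
  by rewrite normE lecR; apply: ltW.
rewrite normE [X in _ * X]normE -rmorphM ltcR.
have Hq' : nrm q.[eps] <= Mr by rewrite -lecR -normE.
have H1 : nrm eps * (Mr + 1) < e by rewrite -ltr_pdivlMr // ltr_wpDl.
have Hn0 := nrm_ge0 eps.
have Hn1 := nrm_ge0 q.[eps].
nra.
Qed.
End Lim.

Section Mom0.
Variable R : realType.
Local Open Scope complex_scope.
Lemma moments0 (P : probability R R) : moments P 0%N = 1.
Proof.
rewrite /moments.
have -> : (\int[P]_x ((x : R) ^+ 0)%:E)%E = (\int[P]_x (cst (1 : R) x)%:E)%E.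
  by apply: eq_integral => x _; rewrite expr0.
have -> : (\int[P]_x (cst (1 : R) x)%:E)%E = (\int[P]_x (cst (1 : \bar R) x))%E by [].
rewrite integral_cst // mul1e.
exact: (congr1 (fun x => (fine x)%:C) (@probability_setT _ _ _ P)).
Qed.
End Mom0.


Unset Implicit Arguments. Set Strict Implicit. Set Printing Implicit Defensive.

Theorem corollary4p6 (R : realType) (mu : R -> probability R R)
    (V : nat -> R -> {poly R[i]}) :
  free_conv_semigroup mu ->
  fluctuation_family mu V ->
  (forall t : R, 0 <= t ->
     is_basis_nat (fun n => if n is 0 then 1 else V n t)) /\
  (forall Vstar : nat -> R -> Mom R,
     (forall t : R, 0 <= t -> forall n, (0 < n)%N ->
        pairing (Vstar n t) 1 = 0 /\
        (forall k, (0 < k)%N -> pairing (Vstar n t) (V k t) = (n == k)%:R)) ->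
     forall n, (0 < n)%N -> forall s t : R, 0 <= s -> 0 <= t ->
       is_DCt mu t (moments (mu s)) (Vstar n s) (Vstar n (t + s))).
Proof.
Local Open Scope complex_scope.
move=> [FM SG] FF.
have Hbasis : forall t : R, 0 <= t -> is_basis_nat (fun n => if n is 0 then 1 else V n t).
  move=> t t0; apply: basis_of_sizes => -[|k]; first by rewrite size_poly1.
  by apply: size_of_deriv => //; have [_ ->] := FF k.+1 isT.
split => // Vstar HV n n0 s t s0 t0.
set ms := moments (mu s).
set nu := Vstar n s.
have nu0 : nu 0%N = 0 by have [H _] := HV s s0 n n0; rewrite pairing1 in H.
have ms0 : ms 0%N = 1 := moments0 _.
have fc0 : forall u, 0 <= u -> forall j,
    fcK (moments (mu u)) j = u%:C * fcK (moments (mu 1)) j.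
  move=> u u0 [|j]; first by rewrite !fcK0 mulr0.
  exact: SG.
have [t_eq0 | tneq0] := eqVneq t 0.
  rewrite t_eq0 add0r => m e e0; exists 1; split => // eps eps0 _.
  have Ct0 : forall tau : Mom R, tau 0%N = 1 -> forall m, Ct mu 0 tau m = tau m.
    move=> tau tau0 m'; rewrite /Ct /boxplus mom_of_cumE.
    rewrite (_ : (fun j => free_cum (moments (mu 0)) j + free_cum tau j) = fcK tau).
      exact: mcK_fcK.
    apply: boolp.funext => j; rewrite free_cumE fc0 // mul0r add0r //.
  rewrite !Ct0 //; last by rewrite nu0 mulr0 addr0.
  have -> : (ms m + eps * nu m - ms m) / eps = nu m by field.
  by rewrite subrr normr0 ltcR.
have tpos : 0 < t by rewrite lt_neqAle eq_sym tneq0 t0.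
set mt := moments (mu t).
set mT := moments (mu (t + s)).
set kt := fcK mt.
have ts0 : 0 <= t + s by apply: addr_ge0.
have mT0 : mT 0%N = 1 := moments0 _.
have Hsg : forall j, fcK mT j = kt j + fcK ms j.
  by move=> j; rewrite /kt /mT /mt /ms (fc0 _ ts0) (fc0 _ t0) (fc0 _ s0) rmorphD mulrDl.
set eta := fun j => nu j.+1 / j.+1%:R.
have Heta : forall j, nu j.+1 = j.+1%:R * eta j.
  by move=> j; rewrite /eta mulrC divfK // pnatr_eq0.
set lam := fun i => i%:R * \sum_(j < i) eta j * ps_exp (invFg ms mT) j.+1 i.
have HC : forall m, Vstar n (t + s) m = lam m.
  apply: (basis_unique (Hbasis _ ts0)) => -[|k].
    have [-> _] := HV _ ts0 n n0.
    by rewrite pairing1 /lam mul0r.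
  rewrite (HV _ ts0 n n0).2 // (kop_pair ms mT _ nu0 Heta).
  have [Hm _] := FF k.+1 isT.
  rewrite /ms /mT Hm //; last by rewrite ltrDr.
  rewrite (deriv_pair _ nu0 Heta).
  by rewrite (HV s s0 n n0).2.
have Hrho : forall (eps : R[i]) m,
    Ct mu t (fun k => ms k + eps * nu k) m = (rho ms nu kt m).[eps].
  move=> eps m; rewrite /rho -horner_evalE mcK_morph /Ct /boxplus mom_of_cumE.
  congr mcK; apply: boolp.funext => j.
  rewrite /krho rmorphD fcK_morph /= horner_evalE hornerC free_cumE.
  congr (_ + fcK _ _); apply: boolp.funext => k.
  by rewrite horner_evalE /te /= hornerD hornerC hornerM hornerC hornerX mulrC.
have Hrho0 : forall m, Ct mu t ms m = (rho ms nu kt m).[0].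
  move=> m; rewrite -Hrho; congr Ct; apply: boolp.funext => k.
  by rewrite mul0r addr0.
move=> m e e0.
have [d [d0 Hd]] := poly_lim (rho ms nu kt m) e0.
exists d; split => // eps eps0 Heps.
rewrite Hrho Hrho0 HC /lam -(eps_main ms0 mT0 nu0 Heta Hsg).
exact: Hd.
Qed.
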